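(* Let $M$ be a $po$-$\Gamma$-semigroup. Then $M$ is completely regular if and only if every bi-ideal of $M$ is semiprime.
   Context: A $po$-$\Gamma$-semigroup is a triple $(M,\Gamma,\le)$ where $M,\Gamma$ are nonempty sets with a map $M\times\Gamma\times M\to M$, $(a,\gamma,b)\mapsto a\gamma b$, satisfying $(a\gamma b)\mu c=a\gamma(b\mu c)$ for all $a,b,c\in M$, $\gamma,\mu\in\Gamma$, and $\le$ is a partial order on $M$ such that $a\le b$ implies $a\gamma c\le b\gamma c$ and $c\gamma a\le c\gamma b$ for all $c\in M$, $\gamma\in\Gamma$. For $A,B\subseteq M$, $A\Gamma B=\{a\gamma b: a\in A,\gamma\in\Gamma,b\in B\}$ (with $a\Gamma B$ meaning $\{a\}\Gamma B$, etc.), and $(A]=\{t\in M: t\le a \text{ for some } a\in A\}$. $M$ is regular if $a\in(a\Gamma M\Gamma a]$ for all $a\in M$; left regular if $a\in(M\Gamma a\Gamma a]$ for all $a\in M$; right regular if $a\in(a\Gamma a\Gamma M]$ for all $a\in M$; completely regular if it is regular, left regular and right regular. A bi-ideal of $M$ is a nonempty subset $B\subseteq M$ such that $B\Gamma M\Gamma B\subseteq B$ and, whenever $a\in B$, $b\in M$ and $b\le a$, then $b\in B$. A subset $B$ of $M$ is semiprime if for every $a\in M$, $a\Gamma a\subseteq B$ implies $a\in B$. *)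

(* Defs.v *)
Record poGammaSemigroup := {
  carrier : Type;
  gam : Type;
  carrier_inhabited : inhabited carrier;
  gam_inhabited : inhabited gam;
  op : carrier -> gam -> carrier -> carrier;
  le : carrier -> carrier -> Prop;
  op_assoc : forall (a b c : carrier) (g m : gam),
      op (op a g b) m c = op a g (op b m c);
  le_refl : forall a, le a a;
  le_antisym : forall a b, le a b -> le b a -> a = b;
  le_trans : forall a b c, le a b -> le b c -> le a c;
  le_op_r : forall (a b c : carrier) (g : gam), le a b -> le (op a g c) (op b g c);
  le_op_l : forall (a b c : carrier) (g : gam), le a b -> le (op c g a) (op c g b)
}.

Section Defs.
Variable S : poGammaSemigroup.
Let M := carrier S.
Let G := gam S.

Definition setGam (A B : M -> Prop) : M -> Prop :=
  fun t => exists a g b, A a /\ B b /\ t = op S a g b.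

Definition fullset : M -> Prop := fun _ => True.
Definition single (a : M) : M -> Prop := fun t => t = a.

Definition downcl (A : M -> Prop) : M -> Prop :=
  fun t => exists a, A a /\ le S t a.

Definition regular : Prop :=
  forall a : M, downcl (setGam (setGam (single a) fullset) (single a)) a.
Definition left_regular : Prop :=
  forall a : M, downcl (setGam (setGam fullset (single a)) (single a)) a.
Definition right_regular : Prop :=
  forall a : M, downcl (setGam (setGam (single a) (single a)) fullset) a.
Definition completely_regular : Prop :=
  regular /\ left_regular /\ right_regular.

Definition bi_ideal (B : M -> Prop) : Prop :=
  (exists x, B x) /\
  (forall t, setGam (setGam B fullset) B t -> B t) /\
  (forall a b, B a -> le S b a -> B b).

Definition semiprime (B : M -> Prop) : Prop :=
  forall a : M, (forall g : G, B (op S a g a)) -> B a.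

End Defs.

(* Main.v *)
Require Import Defs.

Section H.
Variable S : poGammaSemigroup.
Notation o := (op S).
Notation le := (le S).

Lemma mono4 a b c d g h m : le a b -> le c d -> le (o (o a g m) h c) (o (o b g m) h d).
Proof.
  intros H1 H2. eapply (le_trans S). apply le_op_r, le_op_r, H1. apply le_op_l, H2.
Qed.

Lemma downcl_bi (P : carrier S -> Prop) :
  (exists x, P x) ->
  (forall p1 p2 m g h, P p1 -> P p2 -> P (o (o p1 g m) h p2)) ->
  bi_ideal S (downcl S P).
Proof.
  intros [x Hx] HP. split; [|split].
  - exists x. exists x. split; auto. apply le_refl.
  - intros t [u [h [t2 [[t1 [g [m [[p1 [Hp1 Hl1]] [_ E1]]]]] [[p2 [Hp2 Hl2]] E]]]]].
    subst. exists (o (o p1 g m) h p2). split; auto. apply mono4; auto.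
  - intros a b [p [Hp Hl]] Hb. exists p. split; auto. eapply (le_trans S); eauto.
Qed.

Lemma inh_c : exists x : carrier S, True.
Proof. destruct (carrier_inhabited S) as [x]. eauto. Qed.
Lemma inh_g : exists x : gam S, True.
Proof. destruct (gam_inhabited S) as [x]. eauto. Qed.

Lemma main_dir (HB : forall B, bi_ideal S B -> semiprime S B) : completely_regular S.
Proof.
  destruct inh_c as [m0 _]. destruct inh_g as [g0 _].
  assert (L1 : forall a, exists m g, le a (o m g a)).
  { intros a.
    assert (Hd : downcl S (fun t => exists m g, t = o m g a) a).
    { apply HB; [apply downcl_bi|].
      - exists (o m0 g0 a). eauto.
      - intros p1 p2 m g h _ [m2 [g2 ->]].
        exists (o (o p1 g m) h m2), g2; now rewrite !op_assoc.
      - intros g. exists (o a g a). split; [eauto|apply le_refl]. }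
    destruct Hd as [p [[m [g ->]] Hl]]; eauto. }
  assert (R1 : forall a, exists m g, le a (o a g m)).
  { intros a.
    assert (Hd : downcl S (fun t => exists m g, t = o a g m) a).
    { apply HB; [apply downcl_bi|].
      - exists (o a g0 m0). eauto.
      - intros p1 p2 m g h [m2 [g2 ->]] _.
        exists (o (o m2 g m) h p2), g2; now rewrite !op_assoc.
      - intros g. exists (o a g a). split; [eauto|apply le_refl]. }
    destruct Hd as [p [[m [g ->]] Hl]]; eauto. }
  split; [|split].
  - intros a.
    assert (Hd : downcl S (fun t => exists m g d, t = o (o a g m) d a) a).
    { apply HB; [apply downcl_bi|].
      - exists (o (o a g0 m0) g0 a). eauto.
      - intros p1 p2 m g h [m1 [g1 [d1 ->]]] [m2 [g2 [d2 ->]]].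
        exists (o m1 d1 (o a g (o m h (o a g2 m2)))), g1, d2.
        now rewrite !op_assoc.
      - intros g. destruct (R1 a) as [m [d Hm]]. exists (o (o a d m) g a). split.
        + eauto.
        + apply le_op_r, Hm. }
    destruct Hd as [p [[m [g [d ->]]] Hl]].
    exists (o (o a g m) d a). split; auto.
    exists (o a g m), d, a. split; [|split; reflexivity]. exists a, g, m. repeat split.
  - intros a.
    assert (Hd : downcl S (fun t => exists m g d, t = o (o m g a) d a) a).
    { apply HB; [apply downcl_bi|].
      - exists (o (o m0 g0 a) g0 a). eauto.
      - intros p1 p2 m g h _ [m2 [g2 [d2 ->]]].
        exists (o (o p1 g m) h m2), g2, d2; now rewrite !op_assoc.
      - intros g. destruct (L1 a) as [m [d Hm]]. exists (o (o m d a) g a). split.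
        + eauto.
        + apply le_op_r, Hm. }
    destruct Hd as [p [[m [g [d ->]]] Hl]].
    exists (o (o m g a) d a). split; auto.
    exists (o m g a), d, a. split; [|split; reflexivity]. exists m, g, a. repeat split.
  - intros a.
    assert (Hd : downcl S (fun t => exists m g d, t = o (o a g a) d m) a).
    { apply HB; [apply downcl_bi|].
      - exists (o (o a g0 a) g0 m0). eauto.
      - intros p1 p2 m g h [m1 [g1 [d1 ->]]] _.
        exists (o (o m1 g m) h p2), g1, d1; now rewrite !op_assoc.
      - intros g. destruct (R1 a) as [m [d Hm]]. exists (o (o a g a) d m). split.
        + eauto.
        + rewrite op_assoc. apply le_op_l, Hm. }
    destruct Hd as [p [[m [g [d ->]]] Hl]].
    exists (o (o a g a) d m). split; auto.
    exists (o a g a), d, m. split; [|split; reflexivity]. exists a, g, a. repeat split.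
Qed.

Lemma other_dir (H : completely_regular S) : forall B, bi_ideal S B -> semiprime S B.
Proof.
  destruct H as [Hr [Hl Hrr]]. intros B [_ [HBB HBd]] a Ha.
  destruct (Hr a) as [t [[u [be [a1 [[a2 [al [x [E2 [_ E3]]]]] [E4 E5]]]]] Hle]].
  unfold single in *. subst.
  destruct (Hrr a) as [t [[u [de [y [[a3 [ga [a4 [E2 [E6 E3]]]]] [_ E5]]]]] Hle2]].
  unfold single in *. subst.
  destruct (Hl a) as [t [[u [ze [a5 [[z [ep [a6 [_ [E6 E3]]]]] [E4 E5]]]]] Hle3]].
  unfold single in *. subst.
  apply (HBd (o (o (o a ga a) de (o (o y al x) be z)) ep (o a ze a))).
  - apply HBB. do 3 eexists. split; [|split; [apply Ha|reflexivity]].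
    do 3 eexists. split; [apply Ha|split; [exact I|reflexivity]].
  - eapply (le_trans S). apply Hle.
    replace (o (o (o a ga a) de (o (o y al x) be z)) ep (o a ze a))
      with (o (o (o (o a ga a) de y) al x) be (o (o z ep a) ze a)).
    + apply mono4; auto.
    + rewrite !op_assoc. reflexivity.
Qed.
End H.

Theorem proposition4 (S : poGammaSemigroup) :
  completely_regular S <->
  (forall B : carrier S -> Prop, bi_ideal S B -> semiprime S B).
Proof.
  split; [apply other_dir | apply main_dir].
Qed.
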